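(* Let $\hat{\mathbf Q}=\tilde{\mathbf Q}_{st}+\tilde{\mathbf Q}_{\mathcal I}\varepsilon$ be an $n\times n$ dual quaternion Hermitian matrix with $\tilde{\mathbf Q}_{st}=(\tilde q_{1,ij})$ and $\tilde{\mathbf Q}_{\mathcal I}=(\tilde q_{2,ij})$. Suppose $\tilde q_{1,ij}=0$ and $\tilde q_{1,ii}\neq\tilde q_{1,jj}$ for all $i\neq j$. Then for each $i=1,\dots,n$, $\tilde q_{1,ii}+\tilde q_{2,ii}\varepsilon$ is an eigenvalue of $\hat{\mathbf Q}$ with corresponding eigenvector $\hat{\mathbf v}_i$ whose $i$-th component is $1$ and whose $j$-th component, for $j\neq i$, is $\dfrac{\tilde q_{2,ji}}{\tilde q_{1,ii}-\tilde q_{1,jj}}\varepsilon$.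
   Context: Quaternions $q=q_0+q_1\mathbf i+q_2\mathbf j+q_3\mathbf k$ with conjugate $q^\ast$; dual quaternions $q_{st}+q_{\mathcal I}\varepsilon$ with $\varepsilon$ commuting with quaternions, $\varepsilon\ne0$, $\varepsilon^2=0$, multiplied by $(p_{st}+p_{\mathcal I}\varepsilon)(q_{st}+q_{\mathcal I}\varepsilon)=p_{st}q_{st}+(p_{st}q_{\mathcal I}+p_{\mathcal I}q_{st})\varepsilon$. A dual quaternion matrix is Hermitian if it equals its conjugate transpose (so its diagonal entries are dual numbers, i.e. have real standard and dual parts). A dual quaternion vector $\hat{\mathbf x}$ is appreciable if its standard part is nonzero. A dual number $\hat\lambda$ is an eigenvalue of $\hat{\mathbf Q}$ with eigenvector $\hat{\mathbf x}$ if $\hat{\mathbf x}$ is appreciable and $\hat{\mathbf Q}\hat{\mathbf x}=\hat{\mathbf x}\hat\lambda$. *)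

(* Defs.v *)
From mathcomp Require Import all_boot all_order all_algebra.
Set Implicit Arguments. Unset Strict Implicit. Unset Printing Implicit Defensive.
Import Order.TTheory GRing.Theory Num.Theory.
Local Open Scope ring_scope.

Section DQ.
Variable R : realFieldType.

Record quat := Quat { qre : R; qi : R; qj : R; qk : R }.

Definition qzero : quat := Quat 0 0 0 0.
Definition qreal (r : R) : quat := Quat r 0 0 0.
Definition qadd (p q : quat) : quat :=
  Quat (qre p + qre q) (qi p + qi q) (qj p + qj q) (qk p + qk q).
Definition qscale (r : R) (q : quat) : quat :=
  Quat (r * qre q) (r * qi q) (r * qj q) (r * qk q).
Definition qmul (p q : quat) : quat :=
  Quat (qre p * qre q - qi p * qi q - qj p * qj q - qk p * qk q)
       (qre p * qi q + qi p * qre q + qj p * qk q - qk p * qj q)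
       (qre p * qj q - qi p * qk q + qj p * qre q + qk p * qi q)
       (qre p * qk q + qi p * qj q - qj p * qi q + qk p * qre q).
Definition qconj (q : quat) : quat := Quat (qre q) (- qi q) (- qj q) (- qk q).

(* dual quaternion q_st + q_I eps *)
Record dquat := DQ { dst : quat; ddu : quat }.

Definition dqzero : dquat := DQ qzero qzero.
Definition dqone : dquat := DQ (qreal 1) qzero.
Definition dqadd (p q : dquat) : dquat := DQ (qadd (dst p) (dst q)) (qadd (ddu p) (ddu q)).
Definition dqmul (p q : dquat) : dquat :=
  DQ (qmul (dst p) (dst q)) (qadd (qmul (dst p) (ddu q)) (qmul (ddu p) (dst q))).
Definition dqconj (q : dquat) : dquat := DQ (qconj (dst q)) (qconj (ddu q)).
Definition dnum (a b : R) : dquat := DQ (qreal a) (qreal b).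

Definition dqmat (n : nat) := 'I_n -> 'I_n -> dquat.
Definition dqvec (n : nat) := 'I_n -> dquat.

Definition dqmulmv n (Q : dqmat n) (x : dqvec n) : dqvec n :=
  fun i => \big[dqadd/dqzero]_(j < n) dqmul (Q i j) (x j).

Definition dq_hermitian n (Q : dqmat n) : Prop :=
  forall i j, Q i j = dqconj (Q j i).

Definition appreciable n (x : dqvec n) : Prop :=
  exists i, dst (x i) <> qzero.

Definition dq_eigenpair n (Q : dqmat n) (a b : R) (x : dqvec n) : Prop :=
  appreciable x /\ forall i, dqmulmv Q x i = dqmul (x i) (dnum a b).

End DQ.

(* Main.v *)
Require Import Defs.
From mathcomp Require Import all_boot all_order all_algebra.
From mathcomp Require Import ring lra.
Import Order.TTheory GRing.Theory Num.Theory.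
Local Open Scope ring_scope.

Lemma quat_ext (R : realFieldType) (p q : quat R) :
  qre p = qre q -> qi p = qi q -> qj p = qj q -> qk p = qk q -> p = q.
Proof. by case: p => ? ? ? ?; case: q => ? ? ? ? /= -> -> -> ->. Qed.

Lemma dq_ext (R : realFieldType) (p q : dquat R) :
  qre (dst p) = qre (dst q) -> qi (dst p) = qi (dst q) ->
  qj (dst p) = qj (dst q) -> qk (dst p) = qk (dst q) ->
  qre (ddu p) = qre (ddu q) -> qi (ddu p) = qi (ddu q) ->
  qj (ddu p) = qj (ddu q) -> qk (ddu p) = qk (ddu q) -> p = q.
Proof.
case: p => [[? ? ? ?] [? ? ? ?]]; case: q => [[? ? ? ?] [? ? ? ?]] /=.
by move=> -> -> -> -> -> -> -> ->.
Qed.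

Lemma big_dq_comp (R : realFieldType) (f : dquat R -> R)
  (Hf : forall x y, f (dqadd x y) = f x + f y) (H0 : f (dqzero R) = 0)
  n (F : 'I_n -> dquat R) :
  f (\big[@dqadd R/dqzero R]_(j < n) F j) = \sum_(j < n) f (F j).
Proof. exact: (big_morph f Hf H0). Qed.

Ltac comp_tac c := rewrite (@big_dq_comp _ c) //.

Lemma big_dq1 (R : realFieldType) n (F : 'I_n -> dquat R) i :
  (forall j, j != i -> F j = dqzero R) ->
  \big[@dqadd R/dqzero R]_(j < n) F j = F i.
Proof.
move=> Hj.
apply: dq_ext;
  [ comp_tac (fun x : dquat R => qre (dst x)) | comp_tac (fun x : dquat R => qi (dst x))
  | comp_tac (fun x : dquat R => qj (dst x)) | comp_tac (fun x : dquat R => qk (dst x))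
  | comp_tac (fun x : dquat R => qre (ddu x)) | comp_tac (fun x : dquat R => qi (ddu x))
  | comp_tac (fun x : dquat R => qj (ddu x)) | comp_tac (fun x : dquat R => qk (ddu x)) ];
  rewrite (bigD1 i) //= big1 ?addr0 // => j /Hj -> //.
Qed.

Lemma big_dq2 (R : realFieldType) n (F : 'I_n -> dquat R) i k :
  k != i ->
  (forall j, j != i -> j != k -> F j = dqzero R) ->
  \big[@dqadd R/dqzero R]_(j < n) F j = dqadd (F i) (F k).
Proof.
move=> Hki Hj.
apply: dq_ext;
  [ comp_tac (fun x : dquat R => qre (dst x)) | comp_tac (fun x : dquat R => qi (dst x))
  | comp_tac (fun x : dquat R => qj (dst x)) | comp_tac (fun x : dquat R => qk (dst x))
  | comp_tac (fun x : dquat R => qre (ddu x)) | comp_tac (fun x : dquat R => qi (ddu x))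
  | comp_tac (fun x : dquat R => qj (ddu x)) | comp_tac (fun x : dquat R => qk (ddu x)) ];
  rewrite (bigD1 i) //= (bigD1 k) /= ?Hki // big1 ?addr0 //;
  move=> j /andP [ji jk]; by rewrite Hj.
Qed.

Theorem lemma3p7 (R : realFieldType) (n : nat) (Q : dqmat R n) :
  dq_hermitian Q ->
  (forall i j : 'I_n, i != j -> dst (Q i j) = qzero R) ->
  (forall i j : 'I_n, i != j -> dst (Q i i) <> dst (Q j j)) ->
  forall i : 'I_n,
    dq_eigenpair Q (qre (dst (Q i i))) (qre (ddu (Q i i)))
      (fun j : 'I_n =>
         if j == i then dqone R
         else DQ (qzero R)
                 (qscale (qre (dst (Q i i)) - qre (dst (Q j j)))^-1 (ddu (Q j i)))).
Proof.
move=> HH Hoff Hdiag i.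
have Hd : forall k, (qi (dst (Q k k)) = 0 /\ qj (dst (Q k k)) = 0 /\ qk (dst (Q k k)) = 0 /\
    qi (ddu (Q k k)) = 0 /\ qj (ddu (Q k k)) = 0 /\ qk (ddu (Q k k)) = 0).
  move=> k; have E := HH k k.
  have e1 := f_equal (fun x => qi (dst x)) E.
  have e2 := f_equal (fun x => qj (dst x)) E.
  have e3 := f_equal (fun x => qk (dst x)) E.
  have e4 := f_equal (fun x => qi (ddu x)) E.
  have e5 := f_equal (fun x => qj (ddu x)) E.
  have e6 := f_equal (fun x => qk (ddu x)) E.
  move: e1 e2 e3 e4 e5 e6 => /= e1 e2 e3 e4 e5 e6.
  by split; [|split; [|split; [|split; [|split]]]]; lra.
have Ha : forall k, k != i -> qre (dst (Q i i)) - qre (dst (Q k k)) != 0.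
  move=> k ki; rewrite subr_eq0; apply/eqP => E.
  apply: (Hdiag i k); first by rewrite eq_sym.
  have [? [? [? _]]] := Hd i; have [? [? [? _]]] := Hd k.
  by apply: quat_ext; congruence.
split.
  exists i; rewrite eqxx /= => -[] /eqP; by rewrite oner_eq0.
move=> k; rewrite /dqmulmv.
have Hz : forall j, j != i -> j != k ->
   dqmul (Q k j) (if j == i then dqone R else DQ (qzero R)
       (qscale (qre (dst (Q i i)) - qre (dst (Q j j)))^-1 (ddu (Q j i)))) = dqzero R.
  move=> j ji jk; rewrite (negbTE ji).
  have := Hoff k j; rewrite eq_sym => /(_ jk).
  case: (Q k j) => s d /= ->.
  apply: dq_ext => /=; ring.
have [Hd1 [Hd2 [Hd3 [Hd4 [Hd5 Hd6]]]]] := Hd k.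
have [Hi1 [Hi2 [Hi3 [Hi4 [Hi5 Hi6]]]]] := Hd i.
case: (eqVneq k i) => [Eki | ki].
  subst k.
  rewrite (@big_dq1 _ _ _ i); last first.
    by move=> j ji; apply: Hz.
  rewrite eqxx; apply: dq_ext => /=; rewrite ?Hi1 ?Hi2 ?Hi3 ?Hi4 ?Hi5 ?Hi6; ring.
rewrite (@big_dq2 _ _ _ i k ki); last by move=> j ji jk; apply: Hz.
rewrite eqxx (negbTE ki).
have Hk := Ha k ki.
apply: dq_ext => /=; rewrite ?(Hoff k i ki) /= ?Hd1 ?Hd2 ?Hd3 ?Hd4 ?Hd5 ?Hd6; field => //.
Qed.
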